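(* Let $\vec{G}$ be a DDMOG on $n$ vertices with DDM labeling $g$, and index its vertices as $v_1,\dots,v_n$ so that $g(v_i)=i$. Let $\vec{H}$ be an oriented graph on $m$ vertices, vertex-disjoint from $\vec{G}$, with a bijective labeling $h:V(\vec{H})\to\{n+1,\dots,n+m\}$ such that $k=\max_{v\in V(\vec{H})}|wt_h(v)|\le n$ and, for every $0\le i\le k$, $\sum_{v\in V_h^{i}(\vec{H})}h(v)=\sum_{v\in V_h^{-i}(\vec{H})}h(v)$. Then the weighted sum $\vec{G}\oplus_{wt_h}^0\vec{H}$ is a DDMOG on $n+m$ vertices.
   Context: An oriented graph is a finite digraph without loops such that whenever $(u,v)$ is an arc, $(v,u)$ is not. For a vertex $v$, $N^+(v)=\{x:(x,v)\text{ is an arc}\}$, $N^-(v)=\{x:(v,x)\text{ is an arc}\}$; for a labeling $f$, $wt_f(v)=\sum_{x\in N^+(v)}f(x)-\sum_{x\in N^-(v)}f(x)$. A DDM labeling of an oriented graph on $n$ vertices is a bijection $f:V\to\{1,\dots,n\}$ with $wt_f(v)=0$ for all $v$; a DDMOG is an oriented graph admitting one. For an oriented graph $\vec{H}$ with labeling $h$ and an integer $j$, $V_h^{j}(\vec{H})=\{u\in V(\vec{H}):wt_h(u)=j\}$. Weighted sum: let $\vec{G}$ have vertices $v_1,\dots,v_n$ (indexed by a labeling $g$ with $g(v_i)=i$), let $s\in\mathbb{Z}$, and let $\vec{H}$ (vertex-disjoint from $\vec{G}$) have a labeling $h:V(\vec{H})\to\mathbb{Z}^+$ with $\{|wt_h(u)|:u\in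 V(\vec{H})\}\subseteq\{0\}\cup\{i+s:1\le i\le n\}$. Then $\vec{G}\oplus_{wt_h}^s\vec{H}$ is the oriented graph with vertex set $V(\vec{G})\cup V(\vec{H})$ and arc set $E(\vec{G})\cup E(\vec{H})\cup\bigcup_{i=1}^n(E^i\cup E^{-i})$, where $E^i=\{(v_i,u):u\in V_h^{-i-s}(\vec{H})\}$ and $E^{-i}=\{(u,v_i):u\in V_h^{i+s}(\vec{H})\}$. *)

(* Defs.v *)
From mathcomp Require Import all_boot all_order all_algebra.
Set Implicit Arguments. Unset Strict Implicit. Unset Printing Implicit Defensive.
Import GRing.Theory Num.Theory.

Definition oriented (V : finType) (E : rel V) : Prop :=
  (forall v, ~~ E v v) /\ (forall u v, E u v -> ~~ E v u).

Definition wt (V : finType) (E : rel V) (f : V -> nat) (v : V) : int :=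
  (\sum_(x | E x v) (f x)%:Z - \sum_(x | E v x) (f x)%:Z)%R.

Definition DDM_labeling (V : finType) (E : rel V) (f : V -> nat) : Prop :=
  (forall v, 1 <= f v <= #|V|) /\ injective f /\ (forall v, wt E f v = 0%R).

Definition DDMOG (V : finType) (E : rel V) : Prop :=
  oriented E /\ exists f : V -> nat, DDM_labeling E f.

Definition level_set (V : finType) (E : rel V) (h : V -> nat) (j : int) : {set V} :=
  [set u | wt E h u == j].

(* Weighted sum G (+)_{wt_h}^s H on the disjoint union VG + VH; the vertex
   v_i of G is the one with g(v_i) = i. Arc (v_i,u) iff wt_h(u) = -i-s,
   arc (u,v_i) iff wt_h(u) = i+s. *)
Definition wsum (VG VH : finType) (EG : rel VG) (g : VG -> nat) (s : int)
    (EH : rel VH) (h : VH -> nat) : rel (VG + VH) :=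
  fun a b =>
    match a, b with
    | inl x, inl y => EG x y
    | inr x, inr y => EH x y
    | inl v, inr u => wt EH h u == (- ((g v)%:Z + s))%R
    | inr u, inl v => wt EH h u == ((g v)%:Z + s)%R
    end.

(* Main.v *)
Require Import Defs.
From mathcomp Require Import all_boot all_order all_algebra.
From mathcomp Require Import zify.
Import GRing.Theory Num.Theory.

Section Helpers.
Local Open Scope ring_scope.
Lemma Posz_sum (I : finType) (P : pred I) (F : I -> nat) :
  Posz (\sum_(i | P i) F i)%N = (\sum_(i | P i) (F i)%:Z)%R.
Proof. exact: (big_morph Posz PoszD (erefl _)). Qed.

Lemma g_surj (VG : finType) (n : nat) (g : VG -> nat) :
  #|VG| = n -> (forall v, (1 <= g v <= n)%N) -> injective g ->
  forall k, (1 <= k <= n)%N -> exists v, g v = k.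
Proof.
move=> cG rg ig k hk.
have U : uniq (map g (enum VG)) by rewrite map_inj_uniq ?enum_uniq.
have S : {subset map g (enum VG) <= iota 1 n}.
  move=> x /mapP [v _ ->]; rewrite mem_iota; have := rg v; lia.
have Z : (size (iota 1 n) <= size (map g (enum VG)))%N.
  by rewrite size_iota size_map -cardE cG.
have [_ E] := uniq_min_size U S Z.
have : k \in iota 1 n by rewrite mem_iota; lia.
by rewrite -E => /mapP [v _ ->]; exists v.
Qed.

Lemma sum_one (VG : finType) (g : VG -> nat) (P : pred VG) (k : nat) (v : VG) :
  injective g -> g v = k -> (forall a, P a = (g a == k)) ->
  (\sum_(a | P a) (g a)%:Z)%R = k%:Z.
Proof.
move=> ig gv HP.
rewrite (bigD1 v) ?HP ?gv //= big1 ?addr0 // => a /andP [].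
rewrite HP -gv => /eqP /ig -> ; by rewrite eqxx.
Qed.

Lemma sum_none (VG : finType) (F : VG -> int) (P : pred VG) :
  (forall a, ~~ P a) -> (\sum_(a | P a) F a)%R = 0%R.
Proof. by move=> HP; rewrite big1 // => a; rewrite (negbTE (HP a)). Qed.

Lemma aux1 (a b c d : int) : a - c = 0 -> b = d -> (a + b) - (c + d) = 0.
Proof. move=> *; lia. Qed.
Lemma aux2 (a b c d w : int) : b - d = w -> a - c = - w -> (a + b) - (c + d) = 0.
Proof. move=> *; lia. Qed.
End Helpers.

Theorem theorem6 (VG VH : finType) (n m : nat)
    (EG : rel VG) (g : VG -> nat) (EH : rel VH) (h : VH -> nat) :
  #|VG| = n -> oriented EG -> DDM_labeling EG g ->
  #|VH| = m -> oriented EH ->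
  (forall u, n < h u <= n + m) -> injective h ->
  (\max_(u : VH) absz (wt EH h u) <= n)%N ->
  (forall i : nat, (i <= \max_(u : VH) absz (wt EH h u))%N ->
     \sum_(u in level_set EH h i%:Z) h u = \sum_(u in level_set EH h (- i%:Z)%R) h u) ->
  DDMOG (wsum EG g 0%R EH h) /\ #|{: VG + VH}| = n + m.
Proof.
move=> cG [oG1 oG2] [rg [ig wg]] cH [oH1 oH2] rh ih hmax hsum.
have cS : #|{: VG + VH}| = n + m by rewrite card_sum cG cH.
split=> //.
rewrite cG in rg.
have gsurj := @g_surj VG n g cG rg ig.
have bnd : forall u, (absz (wt EH h u) <= n)%N.
  move=> u; apply: leq_trans hmax; exact: leq_bigmax.
pose f (x : VG + VH) := match x with inl v => g v | inr u => h u end.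
split.
  split.
    by case=> x /=; [apply: oG1 | apply: oH1].
  case=> x [] y /=; try by [apply: oG2 | apply: oH2].
    apply/contraL => /eqP ->; apply/negP => /eqP; have := rg x; lia.
  apply/contraL => /eqP ->; apply/negP => /eqP; have := rg y; lia.
exists f; split; [|split].
- rewrite cS; case=> x /=; [have := rg x | have := rh x]; lia.
- case=> x [] y /= E.
  + by rewrite (ig _ _ E).
  + have := rg x; have := rh y; lia.
  + have := rg y; have := rh x; lia.
  + by rewrite (ih _ _ E).
case=> [v | u]; rewrite /wt !big_sumType.
- have W := wg v; rewrite /wt in W.
  have Hs : (\sum_(i | wt EH h i == (Posz (g v)) + 0) (Posz (h i)) =
             \sum_(i | wt EH h i == - ((Posz (g v)) + 0)) (Posz (h i)))%R.
    rewrite addr0 -!Posz_sum; congr Posz.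
    case: (leqP (g v) (\max_(u : VH) absz (wt EH h u))) => Hle.
      have E1 : (\sum_(u in level_set EH h (g v)) h u = \sum_(i | wt EH h i == Posz (g v)) h i)%N.
        by apply: eq_bigl => i; rewrite inE.
      have E2 : (\sum_(u in level_set EH h (- Posz (g v))%R) h u = \sum_(i | wt EH h i == (- Posz (g v))%R) h i)%N.
        by apply: eq_bigl => i; rewrite inE.
      by rewrite -E1 -E2; exact: hsum.
    rewrite !big1 // => i /eqP Ei.
      have := leq_bigmax (F := fun u => absz (wt EH h u)) i; rewrite /= Ei ?abszN /=; lia.
    have := leq_bigmax (F := fun u => absz (wt EH h u)) i; rewrite /= Ei ?abszN /=; lia.
  exact: aux1 W Hs.
- apply: (@aux2 _ _ _ _ (wt EH h u)); first by [].
  change ((\sum_(i | wt EH h u == (- (Posz (g i) + 0))) Posz (g i) - \sum_(i | wt EH h u == (Posz (g i) + 0)) Posz (g i)) = - wt EH h u)%R.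
  have bu := bnd u.
  case E: (wt EH h u) bu => [k|k] bu.
    rewrite (@sum_none _ _ (fun i => Posz k == (- (Posz (g i) + 0))%R)); last first.
      by move=> a; apply/eqP; have := rg a; lia.
    case: (posnP k) => [k0|kp].
      rewrite (@sum_none _ _ (fun i => Posz k == (Posz (g i) + 0)%R)); last first.
        by move=> a; apply/eqP; have := rg a; lia.
      by rewrite k0.
    have [v gv] := gsurj k (ltac:(rewrite kp /=; exact: bu)).
    rewrite (@sum_one _ g (fun i => Posz k == (Posz (g i) + 0)%R) k v ig gv); first by rewrite sub0r.
    by move=> a; apply/eqP/eqP; lia.
  rewrite (@sum_none _ _ (fun i => Negz k == (Posz (g i) + 0)%R)); last first.
    by move=> a; apply/eqP; rewrite NegzE; have := rg a; lia.
  have [v gv] := gsurj k.+1 (ltac:(exact: bu)).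
  rewrite (@sum_one _ g (fun i => Negz k == (- (Posz (g i) + 0))%R) k.+1 v ig gv); first by rewrite subr0 NegzE opprK.
  by move=> a; apply/eqP/eqP; rewrite NegzE; lia.
Qed.
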